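(* Let $\langle (x_n,y_n)\rangle_{n\in\mathbb{N}}$ be the solutions in $\mathbb{N}^2$ of $x^2-19\,y^2=1$, indexed so that $y_0<y_1<\cdots$. Suppose $n>0$ is not a power of $2$ and $y_n/39$ is representable. Then the system \[\begin{cases} X^2-19\cdot 39^2\, Y^2 = 1,\\ X+13^2\, Y = r^2+r\,s+5\,s^2,\\ X+19\cdot 3^2\, Y = v^2+v\,u+5\,u^2,\\ Y>0\end{cases}\] has a solution $\bar X,\bar Y,\bar r,\bar s,\bar v,\bar u\in\mathbb{Z}$ such that $\bar r\neq\pm1$ or $\bar s\neq 0$, and moreover $39\,(\bar X+13^2\bar Y)\,(\bar X+19\cdot 3^2\,\bar Y)\mid y_n$.
   Context: $(x_0,y_0)=(1,0)$, $(x_1,y_1)=(170,39)$, $x_n+y_n\sqrt{19}=(170+39\sqrt{19})^n$; note $39\mid y_k$ for all $k$. A non-negative integer $N$ is called representable if $N=w^2+w\,t+5\,t^2$ for some $w,t\in\mathbb{Z}$. *)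

(* Defs.v *)
From Stdlib Require Import ZArith.
Open Scope Z_scope.

(* (x_n, y_n) with x_n + y_n sqrt 19 = (170 + 39 sqrt 19)^n, i.e. the
   n-th non-negative solution of x^2 - 19 y^2 = 1 (increasing in y). *)
Fixpoint pell19 (n : nat) : Z * Z :=
  match n with
  | O => (1, 0)
  | S m => let '(x, y) := pell19 m in (170 * x + 19 * 39 * y, 39 * x + 170 * y)
  end.

Definition xs (n : nat) : Z := fst (pell19 n).
Definition ys (n : nat) : Z := snd (pell19 n).

Definition representable (N : Z) : Prop :=
  0 <= N /\ exists w t : Z, N = w ^ 2 + w * t + 5 * t ^ 2.

Definition is_pow2 (n : nat) : Prop := exists k : nat, n = Nat.pow 2 k.

(* Main.v *)
Require Import Defs.
From Stdlib Require Import ZArith Znumtheory Lia Wf_nat.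
Open Scope Z_scope.

Lemma step_x k : xs (S k) = 170 * xs k + 19 * 39 * ys k.
Proof. unfold xs, ys; simpl; destruct (pell19 k); reflexivity. Qed.
Lemma step_y k : ys (S k) = 39 * xs k + 170 * ys k.
Proof. unfold xs, ys; simpl; destruct (pell19 k); reflexivity. Qed.
Lemma x0 : xs 0 = 1. Proof. reflexivity. Qed.
Lemma y0 : ys 0 = 0. Proof. reflexivity. Qed.

Lemma add_formula a b : xs (a + b) = xs a * xs b + 19 * ys a * ys b /\
                        ys (a + b) = xs a * ys b + ys a * xs b.
Proof.
  induction b as [|b [IHx IHy]].
  - rewrite Nat.add_0_r, x0, y0. split; ring.
  - rewrite Nat.add_succ_r, !step_x, !step_y, IHx, IHy. split; ring.
Qed.

Lemma pell k : xs k ^ 2 - 19 * ys k ^ 2 = 1.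
Proof.
  induction k as [|k IH]; [reflexivity|].
  rewrite step_x, step_y. rewrite <- IH. ring.
Qed.

Lemma pos k : 1 <= xs k /\ 0 <= ys k /\ ((k > 0)%nat -> 39 <= ys k).
Proof.
  induction k as [|k IH]; [rewrite x0, y0; lia|].
  rewrite step_x, step_y. lia.
Qed.

Lemma parity k : Z.odd (xs k) = Nat.even k /\ Z.odd (ys k) = Nat.odd k.
Proof.
  induction k as [|k [IHx IHy]]; [split; reflexivity|].
  rewrite step_x, step_y, Nat.even_succ, Nat.odd_succ, !Z.odd_add, !Z.odd_mul, IHx, IHy.
  simpl. destruct (Nat.even k), (Nat.odd k); split; reflexivity.
Qed.

Lemma y39 k : ys k = 39 * (ys k / 39).
Proof.
  assert (H : (39 | ys k)).
  { induction k as [|k IH]; [exists 0; reflexivity|].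
    rewrite step_y. destruct IH as [q Hq]. exists (xs k + 170*q). lia. }
  destruct H as [q Hq]. rewrite Hq, Z.div_mul; lia.
Qed.

Lemma dlin d a b u v : (d | a) -> (d | b) -> (d | a*u + b*v).
Proof.
  intros [a1 ->] [b1 ->]. exists (a1*u + b1*v). ring.
Qed.

Lemma relp a b : (forall d, (d | a) -> (d | b) -> (d | 1)) -> rel_prime a b.
Proof. intro H. apply Zis_gcd_intro; auto; apply Z.divide_1_l. Qed.

Lemma decomp : forall N n, n = N -> (0 < n)%nat -> ~ is_pow2 n ->
  exists a m, n = (2^a * m)%nat /\ Nat.odd m = true /\ (1 < m)%nat.
Proof.
  intro N. induction N as [N IH] using (well_founded_induction lt_wf).
  intros n HN Hn Hp. subst N.
  destruct (Nat.even n) eqn:He.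
  - apply Nat.even_spec in He. destruct He as [n' ->].
    destruct (IH n' ltac:(lia) n' eq_refl ltac:(lia)) as [a [m [H1 [H2 H3]]]].
    + intros [k Hk]. apply Hp. exists (S k). simpl. lia.
    + exists (S a), m. split; auto. rewrite H1. simpl. lia.
  - assert (Ho : Nat.odd n = true) by (rewrite <- Nat.negb_even, He; reflexivity).
    exists 0%nat, n. split; [simpl; lia|]. split; auto.
    destruct (Nat.eq_dec n 1); [|lia]. exfalso. apply Hp. exists 0%nat. simpl. lia.
Qed.

Lemma descent m : Z.odd (ys m / 39) = true -> forall a, exists C,
  ys (2^a * m) / 39 = (ys m / 39) * C /\ rel_prime (ys m / 39) C.
Proof.
  intros Hodd a. induction a as [|a [C [HC Hr]]].
  - exists 1. replace (2^0*m)%nat with m by (simpl; lia). split; [ring|apply rel_prime_sym, rel_prime_1].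
  - set (h := (2^a*m)%nat) in *.
    replace (2^S a * m)%nat with (h + h)%nat by (unfold h; simpl; lia).
    destruct (add_formula h h) as [_ Hy].
    assert (HY : ys (h+h) / 39 = 2 * xs h * (ys h / 39)).
    { apply (Z.mul_cancel_l _ _ 39); [lia|]. rewrite <- (y39 (h+h)), Hy.
      transitivity (2 * xs h * (39*(ys h/39))); [rewrite <- (y39 h); ring | ring]. }
    exists (C * (2 * xs h)). split.
    + rewrite HY, HC. ring.
    + apply rel_prime_mult; auto. apply rel_prime_mult.
      * apply Z.odd_spec in Hodd. destruct Hodd as [q Hq].
        apply relp. intros d H1 H2.
        replace 1 with ((ys m / 39) * 1 + 2 * (-q)) by lia. apply dlin; auto.
      * apply relp. intros d H1 H2.
        assert (H3 : (d | ys h / 39)) by (rewrite HC; apply Z.divide_mul_l; auto).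
        assert (HP := pell h). rewrite (y39 h) in HP.
        replace 1 with (xs h * xs h + (ys h / 39) * (- 19 * 39 * 39 * (ys h / 39))) by lia.
        apply dlin; auto.
Qed.
Lemma form_rep : forall N a b c, Z.to_nat a = N -> 0 < a -> b^2 - 4*a*c = -19 ->
  forall x y, exists r s, a*x^2 + b*x*y + c*y^2 = r^2 + r*s + 5*s^2.
Proof.
  intro N. induction N as [N IH] using (well_founded_induction lt_wf).
  intros a b c HN Ha Hd x y.
  set (k := (b + a - 1) / (2*a)).
  assert (Hm := Z.mod_pos_bound (b + a - 1) (2*a) ltac:(lia)).
  assert (Hdm := Z.div_mod (b + a - 1) (2*a) ltac:(lia)).
  fold k in Hdm.
  set (b' := b - 2*a*k). set (c' := a*k^2 - b*k + c).
  assert (Hb1 : -a < b' <= a) by (unfold b'; lia).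
  assert (Hd' : b'^2 - 4*a*c' = -19) by (unfold b', c'; rewrite <- Hd; ring).
  assert (Hv : a*x^2 + b*x*y + c*y^2 = a*(x+k*y)^2 + b'*(x+k*y)*y + c'*y^2)
    by (unfold b', c'; ring).
  rewrite Hv. clearbody b' c'. set (X := x + k*y). clearbody X.
  destruct (Z_lt_ge_dec c' a) as [Hc|Hc].
  - assert (Hc0 : 0 < c') by nia.
    destruct (IH (Z.to_nat c') ltac:(lia) c' (-b') a eq_refl Hc0 ltac:(lia) y (-X))
      as [r [s Hrs]].
    exists r, s. rewrite <- Hrs. ring.
  - assert (Ha2 : a <= 2) by nia.
    assert (a = 1 \/ a = 2) as [->| ->] by lia.
    + assert (b' = 0 \/ b' = 1) as [->| ->] by lia; [lia|].
      assert (c' = 5) as -> by lia. exists X, y. ring.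
    + exfalso. assert (b' = -1 \/ b' = 0 \/ b' = 1 \/ b' = 2) as [->|[->|[->| ->]]] by lia; lia.
Qed.

Lemma rep_of_div : forall A c m, 0 < A -> A*c = m^2 + m + 5 ->
  exists r s, A = r^2 + r*s + 5*s^2.
Proof.
  intros A c m HA H.
  destruct (form_rep (Z.to_nat A) A (2*m+1) c eq_refl HA ltac:(nia) 1 0) as [r [s H']].
  exists r, s. rewrite <- H'. ring.
Qed.

Lemma prime_div_ex : forall N n, Z.to_nat n = N -> 1 < n -> exists p, prime p /\ (p | n).
Proof.
  intro N. induction N as [N IH] using (well_founded_induction lt_wf).
  intros n HN Hn. destruct (prime_dec n) as [Hp|Hp].
  - exists n. split; [auto| apply Z.divide_refl].
  - destruct (not_prime_divide n Hn Hp) as [d [Hd1 Hd2]].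
    destruct (IH (Z.to_nat d) ltac:(lia) d eq_refl ltac:(lia)) as [p [Hp1 Hp2]].
    exists p. split; auto. eapply Z.divide_trans; eauto.
Qed.

Lemma split_rep : forall N A B w t, Z.to_nat A = N -> 0 < A -> rel_prime A B ->
  A*B = w^2 + w*t + 5*t^2 -> exists r s, A = r^2 + r*s + 5*s^2.
Proof.
  intro N. induction N as [N IH] using (well_founded_induction lt_wf).
  intros A B w t HN HA Hrp HAB.
  destruct (Z.eq_dec (Z.gcd A t) 1) as [Hg|Hg].
  - apply Zgcd_1_rel_prime in Hg. apply rel_prime_bezout in Hg.
    destruct Hg as [u v Huv].
    apply (rep_of_div A (v^2*B + w*v*u + 10*u - 5*u^2*A) (w*v) HA).
    assert (E : A * (v^2*B + w*v*u + 10*u - 5*u^2*A) - ((w*v)^2 + w*v + 5)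
       = v^2*(A*B - (w^2+w*t+5*t^2)) + (w*v + 5*(v*t + 1 - u*A))*(u*A + v*t - 1)) by ring.
    rewrite HAB, Huv in E. rewrite Z.sub_diag, Z.sub_diag in E. rewrite Z.mul_0_r, Z.mul_0_r in E. lia.
  - assert (Hg0 := Z.gcd_nonneg A t).
    assert (Z.gcd A t <> 0) by (intro H0; apply Z.gcd_eq_0_l in H0; lia).
    destruct (prime_div_ex _ (Z.gcd A t) eq_refl ltac:(lia)) as [p [Hp Hpg]].
    assert (HpA : (p | A)) by (eapply Z.divide_trans; [eauto| apply Z.gcd_divide_l]).
    assert (Hpt : (p | t)) by (eapply Z.divide_trans; [exact Hpg| apply Z.gcd_divide_r]).
    assert (Hp2 := prime_ge_2 p Hp).
    destruct Hpt as [t1 ->].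
    assert (Hpw : (p | w)).
    { assert (Hw2 : (p | w*w)).
      { replace (w*w) with (A*B - w*(t1*p) - 5*(t1*p)^2) by (rewrite HAB; ring).
        destruct HpA as [a1 ->]. exists (a1*B - w*t1 - 5*t1^2*p). ring. }
      destruct (prime_mult p Hp w w Hw2); auto. }
    destruct Hpw as [w1 ->].
    assert (HrpB : rel_prime p B) by (eapply rel_prime_div; eauto).
    assert (Hp2B : rel_prime (p*p) B).
    { apply rel_prime_sym. apply rel_prime_mult; apply rel_prime_sym; auto. }
    assert (Hdiv : (p*p | A)).
    { apply (Gauss (p*p) B A); auto.
      exists (w1^2 + w1*t1 + 5*t1^2). rewrite Z.mul_comm, HAB. ring. }
    destruct Hdiv as [A1 HA1]. subst A.
    assert (HA1p : 0 < A1) by nia.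
    assert (HA1B : A1 * B = w1^2 + w1*t1 + 5*t1^2).
    { apply (Z.mul_cancel_l _ _ (p*p)); [lia|].
      transitivity (A1*(p*p)*B); [ring|]. rewrite HAB. ring. }
    assert (4 <= p*p) by nia. assert (A1 < A1*(p*p)) by nia.
    destruct (IH (Z.to_nat A1) ltac:(lia) A1 B w1 t1 eq_refl HA1p) as [r [s Hrs]].
    + apply (rel_prime_div _ _ _ Hrp). exists (p*p). ring.
    + auto.
    + exists (p*r), (p*s). rewrite Hrs. ring.
Qed.

Theorem theorem4 (n : nat) :
  (0 < n)%nat -> ~ is_pow2 n -> representable (ys n / 39) ->
  exists X Y r s v u : Z,
    X ^ 2 - 19 * 39 ^ 2 * Y ^ 2 = 1 /\
    X + 13 ^ 2 * Y = r ^ 2 + r * s + 5 * s ^ 2 /\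
    X + 19 * 3 ^ 2 * Y = v ^ 2 + v * u + 5 * u ^ 2 /\
    Y > 0 /\
    ((r <> 1 /\ r <> -1) \/ s <> 0) /\
    (39 * (X + 13 ^ 2 * Y) * (X + 19 * 3 ^ 2 * Y) | ys n).
Proof.
  intros Hn Hp [Hnn [w [t Hwt]]].
  destruct (decomp n n eq_refl Hn Hp) as [a [m [Hnm [Hmo Hm1]]]].
  apply Nat.odd_spec in Hmo. destruct Hmo as [k Hk].
  assert (Hk1 : (k > 0)%nat) by lia.
  set (X := xs k). set (Y := ys k / 39).
  assert (HyY : ys k = 39 * Y) by apply y39.
  destruct (pos k) as [HX [_ HY39]]. specialize (HY39 Hk1).
  assert (HYp : Y > 0) by lia.
  assert (Hpell : X ^ 2 - 19 * 39 ^ 2 * Y ^ 2 = 1).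
  { unfold X. rewrite <- (pell k), HyY. ring. }
  assert (HYm : ys m / 39 = (X + 169*Y) * (X + 171*Y)).
  { apply (Z.mul_cancel_l _ _ 39); [lia|]. rewrite <- y39.
    replace m with ((k + k) + 1)%nat by lia.
    destruct (add_formula (k+k) 1) as [_ Hy1].
    destruct (add_formula k k) as [Hx2 Hy2].
    rewrite Hy1, Hx2, Hy2. change (ys 1) with 39. change (xs 1) with 170.
    fold X. rewrite HyY. ring. }
  assert (Hodd : Z.odd (ys m / 39) = true).
  { assert (H := proj2 (parity m)). rewrite (y39 m), Z.odd_mul in H.
    change (Z.odd 39) with true in H. rewrite Bool.andb_true_l in H.
    rewrite H. apply Nat.odd_spec. exists k. auto. }
  destruct (descent m Hodd a) as [C [HC HrC]].
  rewrite <- Hnm in HC.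
  set (P := X + 169*Y) in *. set (Q := X + 171*Y) in *.
  assert (HPo : Z.odd P = true).
  { rewrite HYm, Z.odd_mul in Hodd. destruct (Z.odd P); auto. }
  assert (HPQ : rel_prime P Q).
  { apply relp. intros d H1 H2.
    assert (H3 : (d | 2*Y)) by (replace (2*Y) with (P*(-1) + Q*1) by (unfold P, Q; ring); apply dlin; auto).
    assert (H4 : (d | 2*X)) by (replace (2*X) with (P*171 + Q*(-169)) by (unfold P, Q; ring); apply dlin; auto).
    assert (H5 : (d | 2)) by (replace 2 with ((2*X)*X + (2*Y)*(-28899*Y)) by lia; apply dlin; auto).
    apply Z.odd_spec in HPo. destruct HPo as [q Hq].
    replace 1 with (P*1 + 2*(-q)) by lia. apply dlin; auto. }
  assert (HrC' : rel_prime P C /\ rel_prime Q C).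
  { split; apply (rel_prime_div _ _ _ HrC); rewrite HYm; [apply Z.divide_mul_l | apply Z.divide_mul_r]; apply Z.divide_refl. }
  destruct HrC' as [HPC HQC].
  assert (HP0 : 0 < P) by (unfold P; lia).
  assert (HQ0 : 0 < Q) by (unfold Q; lia).
  destruct (split_rep _ P (Q*C) w t eq_refl HP0 (rel_prime_mult _ _ _ HPQ HPC)) as [r [s Hrs]].
  { rewrite <- Hwt, HC, HYm. ring. }
  destruct (split_rep _ Q (P*C) w t eq_refl HQ0
      (rel_prime_mult _ _ _ (rel_prime_sym _ _ HPQ) HQC)) as [v [u Hvu]].
  { rewrite <- Hwt, HC, HYm. ring. }
  exists X, Y, r, s, v, u.
  split; [exact Hpell|].
  split; [change (13^2) with 169; exact Hrs|].
  split; [change (19*3^2) with 171; exact Hvu|].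
  split; [exact HYp|].
  split.
  - destruct (Z.eq_dec s 0) as [->|]; [|right; auto].
    left. assert (P > 1) by (unfold P; lia). split; intros ->; lia.
  - change (13^2) with 169. change (19*3^2) with 171. fold P Q.
    rewrite (y39 n), HC, HYm. exists C. ring.
Qed.
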